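(* Let $\mathscr{H}$ be a complex Hilbert space and let $T$ be a Hilbert–Schmidt operator on $\mathscr{H}$. Then $$w_2^2(T)\leq\frac12\|T\|_2^2+\frac12|\mathrm{tr}(T^2)|.$$
   Context: An operator $T$ on $\mathscr{H}$ is Hilbert–Schmidt if $\sum_i\|Te_i\|^2<\infty$ for some (equivalently every) orthonormal basis $\{e_i\}$; its Hilbert–Schmidt norm is $\|T\|_2=(\mathrm{tr}(T^*T))^{1/2}$. $\Re(T)=\frac12(T+T^* )$ and $w_2(T)=\sup_{\theta\in\mathbb{R}}\|\Re(e^{i\theta}T)\|_2$. *)

(* Defs.v *)
From HB Require Import structures.
From mathcomp Require Import all_boot all_order all_algebra.
From mathcomp Require Import all_classical all_reals.
From mathcomp Require Import ereal esum trigo.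
From mathcomp Require Import complex.
Set Implicit Arguments. Unset Strict Implicit. Unset Printing Implicit Defensive.
Import Order.TTheory GRing.Theory Num.Theory.
Local Open Scope classical_set_scope.
Local Open Scope ring_scope.
Local Open Scope complex_scope.

Section Hilbert.
Variables (R : realType) (H : lmodType R[i]) (ip : H -> H -> R[i]).

Definition inner_product : Prop :=
  [/\ (forall (a : R[i]) x y z, ip (a *: x + y) z = a * ip x z + ip y z),
      (forall x y, ip x y = (ip y x)^*),
      (forall x, 0 <= ip x x) &
      (forall x, ip x x = 0 -> x = 0)].

Definition hnorm (x : H) : R := Num.sqrt (complex.Re (ip x x)).

Definition hilbert_complete : Prop :=
  forall u : nat -> H,
    (forall eps : R, 0 < eps -> exists N : nat, forall m n : nat,
        (N <= m)%N -> (N <= n)%N -> hnorm (u m - u n) < eps) ->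
    exists l : H, forall eps : R, 0 < eps -> exists N : nat, forall n : nat,
        (N <= n)%N -> hnorm (u n - l) < eps.

Definition bounded_op (A : H -> H) : Prop :=
  exists M : R, forall x, hnorm (A x) <= M * hnorm x.

Definition adjoint (A As : H -> H) : Prop :=
  forall x y, ip (A x) y = ip x (As y).

Definition onbasis (E : set H) : Prop :=
  [/\ (forall e, E e -> ip e e = 1),
      (forall e f, E e -> E f -> e <> f -> ip e f = 0) &
      (forall x, (forall e, E e -> ip x e = 0) -> x = 0)].

Definition hs_sum (E : set H) (A : H -> H) : \bar R :=
  \esum_(e in E) (((hnorm (A e)) ^+ 2)%:E).

Definition hilbert_schmidt (A : H -> H) : Prop :=
  exists E, onbasis E /\ (hs_sum E A < +oo)%E.

Definition hs_norm (E : set H) (A : H -> H) : R := Num.sqrt (fine (hs_sum E A)).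

(* unordered (net) convergence of sum_{e in E} f e to t *)
Definition usum_to (E : set H) (f : H -> R[i]) (t : R[i]) : Prop :=
  forall eps : R, 0 < eps -> exists F0 : set H,
    [/\ finite_set F0, F0 `<=` E &
      forall F : set H, finite_set F -> F0 `<=` F -> F `<=` E ->
        ComplexField.Normc.normc (\sum_(e \in F) f e - t) < eps].

Definition eith (th : R) : R[i] := cos th +i* sin th.

(* Re(e^{i theta} A) = (e^{i theta} A + e^{-i theta} A^* ) / 2 *)
Definition ReOp (A As : H -> H) (th : R) : H -> H :=
  fun x => (2%:R^-1 : R[i]) *: (eith th *: A x + eith (- th) *: As x).

Definition w2 (E : set H) (A As : H -> H) : R :=
  sup [set hs_norm E (ReOp A As th) | th in [set: R]].

End Hilbert.

(* Main.v *)
Require Import Defs.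
From HB Require Import structures.
From mathcomp Require Import all_boot all_order all_algebra.
From mathcomp Require Import all_classical all_reals.
From mathcomp Require Import ereal esum trigo.
From mathcomp Require Import complex.
From mathcomp Require Import finmap.
From mathcomp Require Import ring lra.
Import Order.TTheory GRing.Theory Num.Theory.
Local Open Scope classical_set_scope.
Local Open Scope ring_scope.
Local Open Scope complex_scope.
Set Implicit Arguments. Unset Strict Implicit. Unset Printing Implicit Defensive.

Lemma key (R : realType) (a w : R[i]) (x y : R) :
  complex.Re ((2%:R^-1 : R[i]) * (2%:R^-1 : R[i])^* * (a * a^* * x%:C + a * (a^*)^* * w + a^* * a^* * w^* + a^* * (a^*)^* * y%:C))
  = (complex.Re a ^+ 2 + complex.Im a ^+ 2) * (x + y) / 4%:R + complex.Re (a * a * w) / 2%:R.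
Proof.
case: a => a1 a2; case: w => w1 w2 /=.

rewrite !(add0r, addr0, mul0r, mulr0, oppr0, opprK, subr0).
by field.
Qed.

Lemma key' (R : realType) (a w : R[i]) (x y : R) : complex.Re a ^+ 2 + complex.Im a ^+ 2 = 1 ->
  complex.Re ((2%:R^-1 : R[i]) * ((2%:R^-1 : R[i])^* * (a * (a^* * x%:C) + a * ((a^*)^* * w) + (a^* * (a^* * w^*) + a^* * ((a^*)^* * y%:C)))))
  = (x + y) / 4%:R + complex.Re (a * a * w) / 2%:R.
Proof.
move=> h.
transitivity (complex.Re ((2%:R^-1 : R[i]) * (2%:R^-1 : R[i])^* * (a * a^* * x%:C + a * (a^*)^* * w + a^* * a^* * w^* + a^* * (a^*)^* * y%:C))).
  by congr complex.Re; ring.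
by rewrite key h mul1r.
Qed.

Section Basics.
Variables (R : realType) (H : lmodType R[i]) (ip : H -> H -> R[i]).
Hypothesis Hip : inner_product ip.

Definition q (z : R[i]) : R := complex.Re z ^+ 2 + complex.Im z ^+ 2.

Lemma q_ge0 z : 0 <= q z.
Proof. by rewrite /q addr_ge0 // sqr_ge0. Qed.

Lemma mulcJq (z : R[i]) : z * z^* = (q z)%:C.
Proof. case: z => a b; rewrite /q /=. apply/eqP; rewrite eq_complex /=; apply/andP; split; apply/eqP; ring. Qed.

Lemma qJ z : q z^* = q z.
Proof. by case: z => a b; rewrite /q /= sqrrN. Qed.

Lemma ipLin a x y z : ip (a *: x + y) z = a * ip x z + ip y z.
Proof. by move: Hip; rewrite /inner_product => -[h _ _ _]; apply: h. Qed.
Lemma ipC x y : ip x y = (ip y x)^*.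
Proof. by move: Hip; rewrite /inner_product => -[_ h _ _]; apply: h. Qed.
Lemma ipge0 x : 0 <= ip x x.
Proof. by move: Hip; rewrite /inner_product => -[_ _ h _]; apply: h. Qed.
Lemma ipeq0 x : ip x x = 0 -> x = 0.
Proof. by move: Hip; rewrite /inner_product => -[_ _ _ h]; apply: h. Qed.

Lemma cjD (a b : R[i]) : (a + b)^* = a^* + b^*.
Proof. by case: a => ? ?; case: b => ? ?; rewrite /= opprD. Qed.
Lemma cjM (a b : R[i]) : (a * b)^* = a^* * b^*.
Proof. case: a => ? ?; case: b => ? ?; apply/eqP; rewrite eq_complex /=; apply/andP; split; apply/eqP; ring. Qed.
Lemma cjN (a : R[i]) : (- a)^* = - a^*.
Proof. by case: a. Qed.
Lemma cjK (a : R[i]) : a^*^* = a.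
Proof. by case: a => ? ?; rewrite /= opprK. Qed.
Lemma cjR (r : R) : (r%:C)^* = r%:C.
Proof. by rewrite /= oppr0. Qed.

Lemma ipDl x y z : ip (x + y) z = ip x z + ip y z.
Proof. by rewrite -{1}(scale1r x) ipLin mul1r. Qed.

Lemma ip0l z : ip 0 z = 0.
Proof.
have := ipDl 0 0 z; rewrite addr0 => /eqP; rewrite -subr_eq0 opprD addrA subrr add0r oppr_eq0 => /eqP //.
Qed.

Lemma ipZl a x z : ip (a *: x) z = a * ip x z.
Proof. by rewrite -[a *: x]addr0 ipLin ip0l addr0. Qed.

Lemma ipNl x z : ip (- x) z = - ip x z.
Proof. by rewrite -scaleN1r ipZl mulN1r. Qed.

Lemma ipBl x y z : ip (x - y) z = ip x z - ip y z.
Proof. by rewrite ipDl ipNl. Qed.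

Lemma ipDr x y z : ip z (x + y) = ip z x + ip z y.
Proof. by rewrite [LHS]ipC [ip z x]ipC [ip z y]ipC ipDl cjD. Qed.

Lemma ipZr a x z : ip z (a *: x) = a^* * ip z x.
Proof. by rewrite [LHS]ipC [ip z x]ipC ipZl cjM. Qed.

Lemma ip0r z : ip z 0 = 0.
Proof. by rewrite ipC ip0l conjc0. Qed.

Lemma ipNr x z : ip z (- x) = - ip z x.
Proof. by rewrite [LHS]ipC [ip z x]ipC ipNl cjN. Qed.

Lemma ipBr x y z : ip z (x - y) = ip z x - ip z y.
Proof. by rewrite ipDr ipNr. Qed.

Lemma ip_sumL (I : Type) (s : seq I) (P : pred I) (F : I -> H) z :
  ip (\sum_(i <- s | P i) F i) z = \sum_(i <- s | P i) ip (F i) z.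
Proof. by apply: (big_morph (fun v => ip v z)) => [u v|]; rewrite ?ipDl ?ip0l. Qed.

Lemma ip_sumR (I : Type) (s : seq I) (P : pred I) (F : I -> H) z :
  ip z (\sum_(i <- s | P i) F i) = \sum_(i <- s | P i) ip z (F i).
Proof. by apply: (big_morph (fun v => ip z v)) => [u v|]; rewrite ?ipDr ?ip0r. Qed.

Lemma ipxx x : ip x x = (complex.Re (ip x x))%:C.
Proof.
have h := ipge0 x; have hi := ger0_Im h.
by move: hi; case: (ip x x) => a b /= ->.
Qed.

Lemma Re_ipxx_ge0 x : 0 <= complex.Re (ip x x).
Proof. by have := ipge0 x; rewrite {1}ipxx ler0c. Qed.

Lemma hnorm_ge0 x : 0 <= hnorm ip x.
Proof. exact: sqrtr_ge0. Qed.

Lemma hnorm2 x : hnorm ip x ^+ 2 = complex.Re (ip x x).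
Proof. by rewrite /hnorm sqr_sqrtr // Re_ipxx_ge0. Qed.

Lemma ReD (a b : R[i]) : complex.Re (a + b) = complex.Re a + complex.Re b.
Proof. by case: a => ? ?; case: b. Qed.
Lemma ReB (a b : R[i]) : complex.Re (a - b) = complex.Re a - complex.Re b.
Proof. by case: a => ? ?; case: b. Qed.
Lemma sumC (I : Type) (s : seq I) (F : I -> R) :
  \sum_(i <- s) (F i)%:C = (\sum_(i <- s) F i)%:C :> R[i].
Proof.
elim: s => [|a s IH]; first by rewrite !big_nil.
by rewrite !big_cons IH; apply/eqP; rewrite eq_complex /= addr0 !eqxx.
Qed.

Section ONB.
Variable E : set H.
Hypothesis HE : onbasis ip E.

Lemma onb1 e : E e -> ip e e = 1.
Proof. by move: HE; rewrite /onbasis => -[h _ _]; apply: h. Qed.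
Lemma onb0 e f : E e -> E f -> e <> f -> ip e f = 0.
Proof. by move: HE; rewrite /onbasis => -[_ h _]; apply: h. Qed.
Lemma onbc x : (forall e, E e -> ip x e = 0) -> x = 0.
Proof. by move: HE; rewrite /onbasis => -[_ _ h]; apply: h. Qed.

Definition vec (F : {fset H}) (d : H -> R[i]) : H := \sum_(e <- F) d e *: e.

Definition inE_ (F : {fset H}) := forall e, e \in F -> E e.

Lemma ip_vec_e F d f : inE_ F -> E f ->
  ip (vec F d) f = if f \in F then d f else 0.
Proof.
move=> FE Ef; rewrite /vec ip_sumL; under eq_bigr do rewrite ipZl.
case: ifP => fF.
  rewrite (big_fsetD1 f fF) /= onb1 // mulr1 big1_fset ?addr0 // => e.
  rewrite !inE => /andP[ef eF] _; rewrite onb0 ?mulr0 //; last by apply/eqP.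
  exact: FE.
apply: big1_fset => e eF _; rewrite onb0 ?mulr0 //; first exact: FE.
by move=> ef; move: eF; rewrite ef fF.
Qed.

Lemma ip_vec_x F d x : ip (vec F d) x = \sum_(e <- F) d e * ip e x.
Proof. by rewrite /vec ip_sumL; apply: eq_bigr => e _; rewrite ipZl. Qed.

Lemma ip_vec_vec F G d : inE_ G -> fsubset F G ->
  ip (vec F d) (vec G d) = (\sum_(e <- F) q (d e))%:C.
Proof.
move=> GE /fsubsetP FG; rewrite ip_vec_x -sumC; apply: eq_fbigr => e eF _.
rewrite ipC ip_vec_e //; last by apply: GE; apply: FG.
by rewrite (FG _ eF) mulcJq.
Qed.

Lemma pyth F x : inE_ F ->
  complex.Re (ip (x - vec F (ip x)) (x - vec F (ip x))) =
  complex.Re (ip x x) - \sum_(e <- F) q (ip x e).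
Proof.
move=> FE; set v := vec F (ip x).
have hvx : ip v x = (\sum_(e <- F) q (ip x e))%:C.
  rewrite ip_vec_x -sumC; apply: eq_bigr => e _; by rewrite [ip e x]ipC mulcJq.
have hxv : ip x v = (\sum_(e <- F) q (ip x e))%:C by rewrite ipC hvx cjR.
have hvv : ip v v = (\sum_(e <- F) q (ip x e))%:C by rewrite ip_vec_vec // fsubset_refl.
rewrite !ipBl !ipBr hvx hxv hvv subrr subr0 ReB /=; done.
Qed.

Lemma diffn F G d : inE_ G -> fsubset F G ->
  complex.Re (ip (vec G d - vec F d) (vec G d - vec F d)) =
  \sum_(e <- G) q (d e) - \sum_(e <- F) q (d e).
Proof.
move=> GE FG.
have FE : inE_ F by move=> e /(fsubsetP FG); apply: GE.
have h1 := ip_vec_vec d GE FG.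
have h2 : ip (vec G d) (vec F d) = (\sum_(e <- F) q (d e))%:C by rewrite ipC h1 cjR.
have h3 := ip_vec_vec d FE (fsubset_refl F).
have h4 := ip_vec_vec d GE (fsubset_refl G).
by rewrite !ipBl !ipBr h1 h2 h3 h4 subrr subr0 ReB.
Qed.

Lemma bessel F x : inE_ F -> \sum_(e <- F) q (ip x e) <= hnorm ip x ^+ 2.
Proof.
move=> FE; have := Re_ipxx_ge0 (x - vec F (ip x)); rewrite pyth // hnorm2.
by rewrite subr_ge0.
Qed.

Lemma bessel1 e x : E e -> q (ip x e) <= hnorm ip x ^+ 2.
Proof.
move=> Ee; have := @bessel [fset e]%fset x; rewrite big_seq_fset1; apply.
by move=> f; rewrite inE => /eqP ->.
Qed.


Lemma fsum_set (A : set H) (g : H -> R) : finite_set A ->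
  (\sum_(e \in A) (g e)%:E)%E = (\sum_(e <- fset_set A) g e)%:E.
Proof. by move=> fA; rewrite fsumEFin // fsbig_finite. Qed.

Lemma sum_fsub_le (F G : {fset H}) (g : H -> R) : fsubset F G ->
  (forall e, 0 <= g e) -> \sum_(e <- F) g e <= \sum_(e <- G) g e.
Proof.
move=> FG g0; rewrite [X in _ <= X](big_fsetID _ (mem F)) /=.
have -> : \sum_(i <- [fset x in G | x \in F]%fset) g i = \sum_(i <- F) g i.
  apply: eq_fbigl => e; rewrite !inE /=; apply/andP/idP => [[]//|eF].
  by split => //; apply: (fsubsetP FG).
by rewrite lerDl sumr_ge0.
Qed.

Lemma hnormN z : hnorm ip (- z) = hnorm ip z.
Proof. by rewrite /hnorm ipNl ipNr opprK. Qed.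

Fixpoint tseq (B : nat -> {fset H}) n : {fset H} :=
  if n is n'.+1 then (tseq B n' `|` B n)%fset else B 0%N.

Lemma tseq_mono B n m : (n <= m)%N -> fsubset (tseq B n) (tseq B m).
Proof.
elim: m => [|m IH]; first by rewrite leqn0 => /eqP ->; exact: fsubset_refl.
rewrite leq_eqVlt => /orP[/eqP ->|]; first exact: fsubset_refl.
rewrite ltnS => /IH h; apply: fsubset_trans h _; exact: fsubsetUl.
Qed.

Lemma tseq_B B n : fsubset (B n) (tseq B n).
Proof. by case: n => [|n] /=; [exact: fsubset_refl|exact: fsubsetUr]. Qed.

Lemma tseq_E B : (forall n, inE_ (B n)) -> forall n, inE_ (tseq B n).
Proof.
move=> BE; elim => [|n IH] //= e; rewrite in_fsetU => /orP[|]; [exact: IH|exact: BE].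
Qed.

End ONB.

Lemma small_inv (eps : R) : 0 < eps -> exists N : nat, forall n, (N <= n)%N -> n.+1%:R^-1 < eps.
Proof.
move=> e0; exists (Num.trunc eps^-1) => n Nn.
rewrite invf_plt ?posrE ?ltr0Sn //.
apply: (lt_le_trans (truncnS_gt _)); by rewrite ler_nat ltnS.
Qed.

Lemma qD a b : q (a + b) <= 2 * q a + 2 * q b.
Proof. case: a => a1 a2; case: b => b1 b2; rewrite /q /=; have := sqr_ge0 (a1 - b1); have := sqr_ge0 (a2 - b2); nra. Qed.

Lemma q0 z : q z = 0 -> z = 0.
Proof.
case: z => a b; rewrite /q /= => /eqP; rewrite paddr_eq0 ?sqr_ge0 // !sqrf_eq0.
by case/andP => /eqP -> /eqP ->.
Qed.

Lemma q00 : q 0 = 0.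
Proof. by rewrite /q /= expr0n /= addr0. Qed.

Lemma sq_lt (a e : R) : 0 <= a -> a < e -> a ^+ 2 < e ^+ 2.
Proof. move=> a0 ae; nra. Qed.

Lemma sq_lt' (a e : R) : 0 <= a -> 0 < e -> a ^+ 2 < e ^+ 2 -> a < e.
Proof. move=> a0 e0 h; rewrite ltNge; apply/negP => h'; nra. Qed.


Section Parseval.
Hypothesis Hcomp : hilbert_complete ip.
Variable E : set H.
Hypothesis HE : onbasis ip E.

Lemma parseval x : (hnorm ip x ^+ 2)%:E = \esum_(e in E) (q (ip x e))%:E.
Proof.
set S := esum _ _.
have S_le : (S <= (hnorm ip x ^+ 2)%:E)%E.
  apply: ge_ereal_sup => _ [A [fA AE] <-].
  rewrite fsum_set // lee_fin; apply: (bessel HE) => e.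
  by rewrite in_fset_set // in_setE => /AE.
have S_ge0 : (0 <= S)%E by apply: esum_ge0 => e _; rewrite lee_fin q_ge0.
have Sfin : S \is a fin_num by rewrite ge0_fin_numE // (le_lt_trans S_le) ?ltry.
set s := fine S.
have Ss : S = s%:E by rewrite fineK.
have fle F : inE_ E F -> \sum_(e <- F) q (ip x e) <= s.
  move=> FE; rewrite -lee_fin -Ss; apply: ereal_sup_ubound.
  exists [set` F]; first by split; [exact: finite_fset|move=> e /= /FE].
  by rewrite fsum_set ?set_fsetK //; exact: finite_fset.
have adh n : exists A : set H, fsets E A /\
    ((s - n.+1%:R^-1)%:E < \sum_(e \in A) (q (ip x e))%:E)%E.
  have [y [A HA <-] h] : exists2 y, [set (\sum_(x0 \in A) (q (ip x x0))%:E)%E | A in fsets E] y &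
      (S - (n.+1%:R^-1)%:E < y)%E.
    by apply: ub_ereal_sup_adherent; rewrite ?invr_gt0 ?ltr0Sn.
  by exists A; split => //; rewrite EFinB -Ss.
have [A HA] := choice adh.
pose B n := fset_set (A n).
have BE n : inE_ E (B n).
  move=> e; rewrite in_fset_set; last exact: (HA n).1.1.
  by rewrite in_setE => /((HA n).1.2).
have Bsum n : s - n.+1%:R^-1 < \sum_(e <- B n) q (ip x e).
  by have := (HA n).2; rewrite fsum_set ?lte_fin //; exact: (HA n).1.1.
pose t := tseq B.
have tE : forall n, inE_ E (t n) := tseq_E (BE).
pose sig n := \sum_(e <- t n) q (ip x e).
have sigle n : sig n <= s := fle _ (tE n).
have siggt n : s - n.+1%:R^-1 < sig n.
  apply: (lt_le_trans (Bsum n)); apply: sum_fsub_le; [exact: tseq_B|move=> e; exact: q_ge0].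
pose y n := vec (t n) (ip x).
have ydiff n m : (n <= m)%N -> hnorm ip (y m - y n) ^+ 2 = sig m - sig n.
  by move=> nm; rewrite hnorm2 (diffn HE) //; exact: tseq_mono.
have cauchyy : forall eps : R, 0 < eps -> exists N : nat, forall m n : nat,
    (N <= m)%N -> (N <= n)%N -> hnorm ip (y m - y n) < eps.
  move=> eps e0; have [N HN] := small_inv (mulr_gt0 e0 e0).
  exists N => m n Nm Nn.
  wlog nm : m n Nm Nn / (n <= m)%N.
    move=> W; case: (leqP n m) => [|/ltnW] h; first exact: W.
    by rewrite -hnormN opprB; apply: W.
  apply: sq_lt' => //; first exact: hnorm_ge0.
  rewrite ydiff //; have := HN n Nn; have := siggt n; have := sigle m.
  rewrite expr2; move: (sig m) (sig n) (n.+1%:R^-1) (eps * eps) => a b c f; lra.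
have [l Hl] := Hcomp cauchyy.
have xl : x = l.
  apply/eqP; rewrite -subr_eq0; apply/eqP; apply: (onbc HE) => e Ee.
  apply: q0; apply/eqP; rewrite eq_le q_ge0 andbT; apply/ler_addgt0Pr => d d0.
  rewrite add0r.
  have d4 : 0 < d / 4 by rewrite divr_gt0 // ltr0n.
  have m0 : 0 < Num.min 1 (d / 4) by rewrite lt_min ltr01 d4.
  have [N1 HN1] := Hl _ m0.
  have [N2 HN2] := small_inv d4.
  pose n := maxn N1 N2.
  have hxl : x - l = (x - y n) + (y n - l) by rewrite addrA subrK.
  rewrite hxl ipDl.
  have ha : q (ip (x - y n) e) < d / 4.
    rewrite ipBl (ip_vec_e HE) //.
    case: ifP => etn; first by rewrite subrr q00.
    rewrite subr0.
    have h1 : q (ip x e) + sig n <= s.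
      have := fle (e |` t n)%fset; rewrite big_fsetU1 ?etn //; apply.
      by move=> f; rewrite in_fsetU inE => /orP[/eqP ->|]; [|exact: tE].
    have h2 := siggt n; have h3 := HN2 n (leq_maxr _ _).
    move: h1 h2 h3; move: (sig n) (q (ip x e)) (n.+1%:R^-1) => a b c; lra.
  have hb : q (ip (y n - l) e) <= d / 4.
    apply: le_trans (bessel1 HE _ Ee) _.
    have h := HN1 n (leq_maxl _ _); have h0 := hnorm_ge0 (y n - l).
    have m1 : Num.min 1 (d / 4) <= 1 by rewrite ge_min lexx.
    have m2 : Num.min 1 (d / 4) <= d / 4 by rewrite ge_min lexx orbT.
    move: h h0 m1 m2; move: (hnorm ip (y n - l)) (Num.min 1 (d / 4)) (d / 4) => a b c; nra.
  apply: le_trans (qD _ _) _; move: ha hb; move: (q (ip (x - y n) e)) (q (ip (y n - l) e)) => a b; lra.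
have hle : hnorm ip x ^+ 2 <= s.
  apply/ler_addgt0Pr => d d0.
  have m0 : 0 < Num.min 1 d by rewrite lt_min ltr01 d0.
  have [N1 HN1] := Hl _ m0.
  have h := HN1 N1 (leqnn _).
  have hp := pyth HE x (tE N1).
  rewrite -/(y N1) -hnorm2 -hnorm2 {1}xl -hnormN opprB in hp.
  have h0 := hnorm_ge0 (y N1 - l).
  have m1 : Num.min 1 d <= 1 by rewrite ge_min lexx.
  have m2 : Num.min 1 d <= d by rewrite ge_min lexx orbT.
  have h3 : \sum_(e <- t N1) q (ip x e) <= s := sigle N1.
  move: h h0 m1 m2 hp h3; move: (hnorm ip (y N1 - l)) (Num.min 1 d) (hnorm ip x ^+ 2) (\sum_(e <- t N1) q (ip x e)) => a b c f.
  nra.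
by apply/eqP; rewrite eq_le S_le Ss lee_fin hle.
Qed.

End Parseval.

Section Swap.
Hypothesis Hcomp : hilbert_complete ip.

Lemma hs_as_double (A : H -> H) E F : onbasis ip F ->
  hs_sum ip E A = \esum_(k in E `*`` (fun=> F)) (q (ip (A k.1) k.2))%:E.
Proof.
move=> HF; transitivity (\esum_(e in E) \esum_(f in F) (q (ip (A e) f))%:E).
  by apply: eq_esum => e _; rewrite (parseval Hcomp HF).
by apply: esum_esum => *; rewrite lee_fin q_ge0.
Qed.

Lemma hs_swap (T Ts : H -> H) E F : adjoint ip T Ts -> onbasis ip E -> onbasis ip F ->
  hs_sum ip E T = hs_sum ip F Ts.
Proof.
move=> adj HE HF; rewrite (hs_as_double _ _ HF) (hs_as_double _ _ HE).
have -> : E `*`` (fun=> F) = (fun k : H * H => (k.2, k.1)) @` (F `*`` (fun=> E)).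
  apply/seteqP; split => [[a b] /= [Ea Fb]|_ [[a b] /= [Fa Eb] <-]] //.
  by exists (b, a).
rewrite esum_image; last by move=> [a b] [c d] _ _ /= [-> ->].
apply: eq_esum => -[a b] _ /=.
by rewrite adj ipC qJ.
Qed.

End Swap.

Lemma reop_hn (T Ts : H -> H) th e : adjoint ip T Ts ->
  hnorm ip (ReOp T Ts th e) ^+ 2 = (hnorm ip (T e) ^+ 2 + hnorm ip (Ts e) ^+ 2) / 4%:R
     + complex.Re (eith th * eith th * ip (T (T e)) e) / 2%:R.
Proof.
move=> adj; rewrite hnorm2 /ReOp ipZl ipZr !ipDl !ipDr !ipZl !ipZr.
have ea : eith (- th) = (eith th)^* by rewrite /eith cosN sinN.
rewrite ea [ip (T (T e)) e]adj [ip (Ts e) (T e)]ipC [ip (T e) (T e)]ipxx [ip (Ts e) (Ts e)]ipxx -!hnorm2.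
apply: key'; rewrite /eith /=; exact: cos2Dsin2.
Qed.

Lemma fset_le_esum E (g : H -> R) F : inE_ E F -> (forall e, 0 <= g e) ->
  ((\sum_(e <- F) g e)%:E <= \esum_(e in E) (g e)%:E)%E.
Proof.
move=> FE g0; apply: ereal_sup_ubound.
exists [set` F]; first by split; [exact: finite_fset|move=> e /= /FE].
by rewrite fsum_set ?set_fsetK //; exact: finite_fset.
Qed.

End Basics.

Lemma ReSum (R : realType) (I : Type) (s : seq I) (f : I -> R[i]) :
  complex.Re (\sum_(i <- s) f i) = \sum_(i <- s) complex.Re (f i).
Proof.
elim: s => [|a s IH]; first by rewrite !big_nil.
by rewrite !big_cons ReD IH.
Qed.

Lemma Re_le_normc (R : realType) (z : R[i]) : complex.Re z <= ComplexField.Normc.normc z.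
Proof.
case: z => a b /=; apply: (le_trans (ler_norm a)); rewrite -sqrtr_sqr.
by apply: ler_wsqrtr; rewrite lerDl sqr_ge0.
Qed.

Lemma normc_eith (R : realType) (th : R) : ComplexField.Normc.normc (eith th) = 1.
Proof. by rewrite /eith /= cos2Dsin2 sqrtr1. Qed.


Unset Implicit Arguments.
Set Strict Implicit.

Theorem corollary3p5 (R : realType) (H : lmodType R[i]) (ip : H -> H -> R[i])
  (Hip : inner_product ip) (Hcomp : hilbert_complete ip)
  (T : {linear H -> H}) (Ts : H -> H)
  (Tbd : bounded_op ip T) (Tadj : adjoint ip T Ts)
  (THS : hilbert_schmidt ip T)
  (E : set H) (HE : onbasis ip E)
  (t : R[i]) (Ht : usum_to E (fun e => ip (T (T e)) e) t) :
  (w2 ip E T Ts) ^+ 2 <=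
    2%:R^-1 * (hs_norm ip E T) ^+ 2 + 2%:R^-1 * ComplexField.Normc.normc t.
Proof.
have [E' [HE' fin']] := THS.
have e1 : hs_sum ip E T = hs_sum ip E' Ts := hs_swap Hip Hcomp Tadj HE HE'.
have e2 : hs_sum ip E' T = hs_sum ip E' Ts := hs_swap Hip Hcomp Tadj HE' HE'.
have e3 : hs_sum ip E Ts = hs_sum ip E T := esym (hs_swap Hip Hcomp Tadj HE HE).
have hfin : (hs_sum ip E T < +oo)%E by rewrite e1 -e2.
have hge0 : (0 <= hs_sum ip E T)%E by apply: esum_ge0 => e _; rewrite lee_fin sqr_ge0.
set A := fine (hs_sum ip E T).
have hA : hs_sum ip E T = A%:E by rewrite fineK // ge0_fin_numE.
have A0 : 0 <= A by rewrite -lee_fin -hA.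
have hsT : hs_norm ip E T ^+ 2 = A by rewrite /hs_norm sqr_sqrtr.
rewrite hsT.
set bnd := 2%:R^-1 * A + 2%:R^-1 * ComplexField.Normc.normc t.
have nt0 : 0 <= ComplexField.Normc.normc t by case: (t) => a b /=; exact: sqrtr_ge0.
have b0 : 0 <= bnd by rewrite /bnd addr_ge0 // mulr_ge0 // invr_ge0 ler0n.
have key th : (hs_sum ip E (ReOp T Ts th) <= bnd%:E)%E.
  apply: ge_ereal_sup => _ [A' [fA A'E] <-]; rewrite fsum_set // lee_fin.
  set G := fset_set A'.
  have GE : inE_ E G by move=> e; rewrite in_fset_set // in_setE => /A'E.
  apply/ler_addgt0Pr => d d0.
  have [F0 [fF0 F0E HF0]] := Ht d d0.
  set K := (G `|` fset_set F0)%fset.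
  have KE : inE_ E K.
    move=> e; rewrite in_fsetU => /orP[/GE //|]; rewrite in_fset_set // in_setE; exact: F0E.
  have hK := HF0 [set` K] (finite_fset K).
  have /hK {hK} hK : F0 `<=` [set` K].
    by move=> e F0e /=; rewrite in_fsetU in_fset_set // (mem_set F0e) orbT.
  have /hK {hK} hK : [set` K] `<=` E by move=> e /= /KE.
  rewrite fsbig_finite ?finite_fset //= set_fsetK in hK.
  apply: le_trans (sum_fsub_le (g := fun e => hnorm ip (ReOp T Ts th e) ^+ 2) (fsubsetUl G (fset_set F0)) (fun e => sqr_ge0 _)) _.
  rewrite -/K.
  under eq_bigr do rewrite (reop_hn Hip _ _ Tadj).
  rewrite big_split /= -!mulr_suml big_split /= -ReSum -mulr_sumr.
  have hx : \sum_(i <- K) hnorm ip (T i) ^+ 2 <= A.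
    by rewrite -lee_fin -hA; apply: fset_le_esum => // e; exact: sqr_ge0.
  have hy : \sum_(i <- K) hnorm ip (Ts i) ^+ 2 <= A.
    by rewrite -lee_fin -hA -e3; apply: fset_le_esum => // e; exact: sqr_ge0.
  set W := \sum_(i <- K) ip (T (T i)) i.
  have hR : complex.Re (eith th * eith th * W) <= ComplexField.Normc.normc t + d.
    apply: le_trans (Re_le_normc _) _.
    rewrite !ComplexField.Normc.normcM !normc_eith !mul1r.
    have : ComplexField.Normc.normc W <= ComplexField.Normc.normc (W - t) + ComplexField.Normc.normc t.
      by rewrite -{1}(subrK t W); exact: le_normcD.
    move: hK; rewrite -/W => hK; lra.
  rewrite /bnd; lra.
have elt th : hs_norm ip E (ReOp T Ts th) <= Num.sqrt bnd.
  rewrite /hs_norm; apply: ler_wsqrtr.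
  have g0 : (0 <= hs_sum ip E (ReOp T Ts th))%E.
    by apply: esum_ge0 => e _; rewrite lee_fin sqr_ge0.
  move: (key th) g0; case: (hs_sum ip E (ReOp T Ts th)) => [r| |] //=.
set S := [set hs_norm ip E (ReOp T Ts th) | th in [set: R]].
have ub : ubound S (Num.sqrt bnd) by move=> _ [th _ <-]; exact: elt.
have ne : S !=set0 by exists (hs_norm ip E (ReOp T Ts 0)), 0.
have wle : w2 ip E T Ts <= Num.sqrt bnd by apply: ge_sup.
have w0 : 0 <= w2 ip E T Ts.
  apply: le_trans (sqrtr_ge0 (fine (hs_sum ip E (ReOp T Ts 0)))) _.
  by apply: ub_le_sup; [exists (Num.sqrt bnd)|exists 0].
rewrite -[X in _ <= X](sqr_sqrtr b0).
have := sqrtr_ge0 bnd; move: wle w0; move: (w2 ip E T Ts) (Num.sqrt bnd) => a b; nra.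
Qed.
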